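(* Let $n,p$ be positive integers with $n-p-1>0$ and $\gamma\ge0$, and let $\pi_{\mathrm{MSVS1}}(M)=\det(M^\top M)^{-(n-p-1)/2}\|M\|_{\mathrm F}^{-\gamma}$ on $\mathbb R^{n\times p}$. Then at every $M$ with $M^\top M$ nonsingular, $$\Delta\pi_{\mathrm{MSVS1}}(M)=\gamma(\gamma+np-2p^2-2p+2)\|M\|_{\mathrm F}^{-2}\pi_{\mathrm{MSVS1}}(M),$$ where $\Delta=\sum_{a=1}^n\sum_{i=1}^p\partial^2/\partial M_{ai}^2$. *)

(* Defs.v *)
From HB Require Import structures.
From mathcomp Require Import all_boot all_order all_algebra.
From mathcomp Require Import all_classical all_reals all_analysis.
Set Implicit Arguments. Unset Strict Implicit. Unset Printing Implicit Defensive.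
Import Order.TTheory GRing.Theory Num.Theory.
Local Open Scope ring_scope.

Definition frob (R : realType) (n p : nat) (M : 'M[R]_(n, p)) : R :=
  Num.sqrt (\sum_(a < n) \sum_(i < p) M a i ^+ 2).

Definition pi_MSVS1 (R : realType) (n p : nat) (gamma : R) (M : 'M[R]_(n, p)) : R :=
  powR (\det (M^T *m M)) (- ((n%:R - p%:R - 1) / 2))
  * powR (frob M) (- gamma).

Definition coord_line (R : realType) (n p : nat) (f : 'M[R]_(n, p) -> R)
  (M : 'M[R]_(n, p)) (a : 'I_n) (i : 'I_p) : R -> R :=
  fun t => f (M + t *: delta_mx a i).

Definition d2_partial (R : realType) (n p : nat) (f : 'M[R]_(n, p) -> R)
  (M : 'M[R]_(n, p)) (a : 'I_n) (i : 'I_p) : R :=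
  derive1 (derive1 (coord_line f M a i)) 0.

Definition laplacian (R : realType) (n p : nat) (f : 'M[R]_(n, p) -> R)
  (M : 'M[R]_(n, p)) : R :=
  \sum_(a < n) \sum_(i < p) d2_partial f M a i.

(* Main.v *)
Require Import Defs.
From HB Require Import structures.
From mathcomp Require Import all_boot all_order all_algebra.
From mathcomp Require Import all_classical all_reals all_analysis.
From mathcomp Require Import ring lra.
Import Order.TTheory GRing.Theory Num.Theory numFieldNormedType.Exports.
Local Open Scope ring_scope.

Section Calc.
Variable R : realType.

Lemma near_pos (f : R -> R) (x df : R) : is_derive x (1:R) f df -> 0 < f x ->
  \forall y \near x, 0 < f y.
Proof.
move=> [fd _] fx.
have c : {for x, continuous f}.
  by apply: differentiable_continuous; apply/derivable1_diffP.
exact: (cvgr_gt (f x) c 0 fx).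
Qed.

Variables (alpha gamma d0 d1 d2 f0 f1 : R).
Hypotheses (hd0 : 0 < d0) (hf0 : 0 < f0).

Let beta := - gamma / 2.
Let Dq t := d0 + d1*t + d2*t^+2.
Let Fq t := f0 + f1*t + t^+2.
Let Lf t := alpha * ln (Dq t) + beta * ln (Fq t).
Let Gf t := expR (Lf t).
Let L1 t := alpha * ((d1 + d2*(2*t)) * (Dq t)^-1) + beta * ((f1 + 2*t) * (Fq t)^-1).
Let L1' t := alpha * (d2*2 * (Dq t)^-1 - (d1 + d2*(2*t))^+2 * (Dq t)^-2)
   + beta * (2 * (Fq t)^-1 - (f1 + 2*t)^+2 * (Fq t)^-2).
Let G1 t := Gf t * L1 t.

Lemma hDd (t : R) : is_derive t 1 Dq (d1 + d2*(2*t)).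
Proof. apply: is_derive_eq; rewrite /GRing.scale /=; ring. Qed.
Lemma hFd (t : R) : is_derive t 1 Fq (f1 + 2*t).
Proof. apply: is_derive_eq; rewrite /GRing.scale /=; ring. Qed.
Lemma hD'd (t : R) : is_derive t 1 (fun t => d1 + d2*(2*t)) (d2*2).
Proof. apply: is_derive_eq; rewrite /GRing.scale /=; ring. Qed.
Lemma hF'd (t : R) : is_derive t 1 (fun t => f1 + 2*t) 2.
Proof. apply: is_derive_eq; rewrite /GRing.scale /=; ring. Qed.

Lemma GfD (t : R) : 0 < Dq t -> 0 < Fq t -> is_derive t 1 Gf (G1 t).
Proof.
move=> Dp Fp.
have lD : is_derive t 1 (fun x => ln (Dq x)) ((Dq t)^-1 * (d1 + d2*(2*t))).
  exact: (is_derive1_comp (is_derive1_ln Dp) (hDd t)).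
have lF : is_derive t 1 (fun x => ln (Fq x)) ((Fq t)^-1 * (f1 + 2*t)).
  exact: (is_derive1_comp (is_derive1_ln Fp) (hFd t)).
have LD : is_derive t 1 Lf (L1 t).
  apply: is_derive_eq; rewrite /GRing.scale /= /L1; ring.
have := is_derive1_comp (is_derive_expR (Lf t)) LD.
by rewrite /G1 /Gf.
Qed.

Lemma G1D (t : R) : 0 < Dq t -> 0 < Fq t -> is_derive t 1 G1 (Gf t * (L1' t + L1 t ^+ 2)).
Proof.
move=> Dp Fp.
have iD := is_deriveV (lt0r_neq0 Dp) (hDd t).
have iF := is_deriveV (lt0r_neq0 Fp) (hFd t).
have gD := @GfD t Dp Fp.
have l1D : is_derive t 1 L1 (L1' t).
  apply: is_derive_eq; rewrite /GRing.scale /= /L1'; ring.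
apply: is_derive_eq; rewrite /GRing.scale /= /G1; ring.
Qed.


Let h t := powR (Dq t) alpha * powR (Num.sqrt (Fq t)) (-gamma).

Lemma h_eq (t : R) : 0 < Dq t -> 0 < Fq t -> h t = Gf t.
Proof.
move=> Dp Fp; rewrite /h /Gf /Lf expRD.
have sp : 0 < Num.sqrt (Fq t) by rewrite sqrtr_gt0.
rewrite /powR (gt_eqF Dp) (gt_eqF sp) -powR12_sqrt ?ltW // ln_powR.
by congr (_ * expR _); rewrite /beta; field.
Qed.

Lemma hder (t : R) : 0 < Dq t -> 0 < Fq t -> is_derive t 1 h (G1 t).
Proof.
move=> Dp Fp.
apply: (near_eq_is_derive _ (@GfD t Dp Fp)).
near=> s.
rewrite h_eq //.
- near: s; exact: near_pos (hDd t) Dp.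
- near: s; exact: near_pos (hFd t) Fp.
Unshelve. all: by end_near.
Qed.

Lemma calc_main : (\forall t \near 0, derivable h t 1) /\ derivable (derive1 h) 0 1
  /\ derive1 (derive1 h) 0 = h 0 * (L1' 0 + L1 0 ^+ 2).
Proof.
have D0 : Dq 0 = d0 by rewrite /Dq mulr0 expr0n /= mulr0 !addr0.
have F0 : Fq 0 = f0 by rewrite /Fq mulr0 expr0n /= !addr0.
have nD : \forall t \near (0:R), 0 < Dq t.
  by apply: near_pos (hDd 0) _; rewrite D0.
have nF : \forall t \near (0:R), 0 < Fq t.
  by apply: near_pos (hFd 0) _; rewrite F0.
have nE : \forall t \near (0:R), G1 t = derive1 h t.
  near=> t; rewrite derive1E.
  have Dt : 0 < Dq t by near: t.
  have Ft : 0 < Fq t by near: t.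
  by have := @hder t Dt Ft; move=> /@derive_val ->.
have D0p : 0 < Dq 0 by rewrite D0.
have F0p : 0 < Fq 0 by rewrite F0.
have g1 := @G1D 0 D0p F0p.
split.
  near=> t; apply: ex_derive; apply: hder; near: t; [exact: nD| exact: nF].
split.
  by apply: near_eq_derivable nE _; case: g1.
rewrite derive1E -(near_eq_derive _ nE) derive_val h_eq //.
Unshelve. all: by end_near.
Qed.

End Calc.

Section Cof.

Variable R : comUnitRingType.

Lemma cof_row_indep (q : nat) (X Y : 'M[R]_q) (i k : 'I_q) :
  (forall j l, j != i -> X j l = Y j l) -> cofactor X i k = cofactor Y i k.
Proof.
move=> H; rewrite /cofactor; congr (_ * \det _); apply/matrixP => j l.
by rewrite !mxE; apply: H; rewrite eq_sym neq_lift.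
Qed.

Lemma cof_ii_indep (q : nat) (X Y : 'M[R]_q) (i : 'I_q) :
  (forall j l, j != i -> l != i -> X j l = Y j l) -> cofactor X i i = cofactor Y i i.
Proof.
move=> H; rewrite /cofactor; congr (_ * \det _); apply/matrixP => j l.
by rewrite !mxE; apply: H; rewrite eq_sym neq_lift.
Qed.

Lemma det_row_change (q : nat) (X Y : 'M[R]_q) (i : 'I_q) :
  (forall j l, j != i -> X j l = Y j l) ->
  \det X = \sum_k X i k * cofactor Y i k.
Proof.
move=> H; rewrite (expand_det_row X i); apply: eq_bigr => k _.
by rewrite (@cof_row_indep _ X Y i k H).
Qed.

Lemma cof1 (q : nat) (i k : 'I_q) : cofactor (1%:M : 'M[R]_q) i k = (i == k)%:R.
Proof.
have := congr1 (fun A : 'M[R]_q => A k i) (adj1 R q).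
by rewrite /adjugate mxE => ->; rewrite mxE eq_sym.
Qed.

Lemma delta_mulE (q r : nat) (i : 'I_q) (X : 'M[R]_(1, r)) j l :
  (delta_mx i 0 *m X) j l = (j == i)%:R * X 0 l.
Proof. by rewrite mxE big_ord1 mxE eqxx andbT. Qed.

Lemma mul_deltaE (q r : nat) (i : 'I_q) (X : 'M[R]_(r, 1)) j l :
  (X *m delta_mx 0 i) j l = X j 0 * (l == i)%:R.
Proof. by rewrite mxE big_ord1 mxE eqxx. Qed.

End Cof.

Section DetLine.
Variable R : fieldType.
Variables (n p : nat) (M : 'M[R]_(n,p)) (a : 'I_n) (i : 'I_p).
Hypothesis hS : M^T *m M \in unitmx.
Let S := M^T *m M.
Let Si := invmx S.
Let ea : 'cV[R]_n := delta_mx a 0.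
Let ei : 'cV[R]_p := delta_mx i 0.
Let m := M^T *m ea.
Let w := Si *m m.

Lemma Si_sym : Si^T = Si.
Proof. by rewrite /Si trmx_inv /S trmx_mul trmxK. Qed.

Lemma eaea : ea^T *m ea = 1%:M.
Proof.
rewrite /ea trmx_delta mul_delta_mx.
by apply/matrixP => x y; rewrite !ord1 !mxE.
Qed.

Lemma E_eq : delta_mx a i = ea *m ei^T.
Proof. by rewrite /ea /ei trmx_delta mul_delta_mx. Qed.

Lemma A_eq (t : R) : (M + t *: delta_mx a i)^T *m (M + t *: delta_mx a i)
  = S + t *: (ei *m m^T + m *m ei^T) + t^+2 *: (ei *m ei^T).
Proof.
rewrite E_eq.
have -> : (M + t *: (ea *m ei^T))^T = M^T + t *: (ei *m ea^T).
  by rewrite linearD linearZ /= trmx_mul trmxK.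
rewrite mulmxDl !mulmxDr -!scalemxAl -!scalemxAr scalerA -expr2.
rewrite /m trmx_mul trmxK (mulmxA M^T) -(mulmxA ei ea^T M).
rewrite (mulmxA _ ea) -(mulmxA ei) eaea mulmx1.
rewrite scalerDr !addrA; congr (_ + _).
by rewrite addrAC.
Qed.

Lemma PSP_eq (t : R) :
  (1%:M + t *: (w *m ei^T))^T *m S *m (1%:M + t *: (w *m ei^T))
  = S + t *: (ei *m m^T + m *m ei^T) + (t^+2 * (m^T *m w) 0 0) *: (ei *m ei^T).
Proof.
have -> : (1%:M + t *: (w *m ei^T))^T = 1%:M + t *: (ei *m w^T).
  by rewrite linearD linearZ /= trmx1 trmx_mul trmxK.
have wS : w^T *m S = m^T by rewrite /w trmx_mul Si_sym -mulmxA mulVmx // mulmx1.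
have Sw : S *m w = m by rewrite /w mulmxA mulmxV // mul1mx.
rewrite !(mulmxDl, mulmxDr) !(mul1mx, mulmx1).
rewrite -!scalemxAl -!scalemxAr !scalerA -expr2.
rewrite -!(mulmxA ei w^T) wS (mulmxA S) Sw (mulmxA _ w) -(mulmxA ei m^T w).
rewrite (mx11_scalar (m^T *m w)) mul_mx_scalar -scalemxAl scalerA.
rewrite scalerDr !addrA; congr (_ + (_ * _) *: _).
by rewrite [RHS]mxE eqxx mulr1n.
Qed.


Let rho := 1 - (m^T *m w) 0 0.
Let P (t : R) := 1%:M + t *: (w *m ei^T).

Lemma eiei : ei *m ei^T = delta_mx i i.
Proof. by rewrite /ei trmx_delta mul_delta_mx. Qed.

Lemma A_PSP (t : R) : (M + t *: delta_mx a i)^T *m (M + t *: delta_mx a i)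
  = (P t)^T *m S *m P t + (t^+2 * rho) *: delta_mx i i.
Proof.
rewrite A_eq PSP_eq -eiei -[RHS]addrA -scalerDl; congr (_ + _ *: _).
by rewrite /rho; ring.
Qed.

Lemma PSP_off (t : R) j l : j != i -> l != i -> ((P t)^T *m S *m P t) j l = S j l.
Proof.
move=> ji li; rewrite PSP_eq /ei trmx_delta mul_delta_mx.
rewrite !(delta_mulE, mul_deltaE, mxE).
by rewrite (negbTE ji) (negbTE li) /= !mulr0n !mulr0 !mul0r !addr0 mulr0 addr0.
Qed.

Lemma detP (t : R) : \det (P t) = 1 + t * w i 0.
Proof.
rewrite -det_tr.
have PT : (P t)^T = 1%:M + t *: (ei *m w^T).
  by rewrite /P linearD linearZ /= trmx1 trmx_mul trmxK.
rewrite (@det_row_change _ _ _ 1%:M i).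
  rewrite (bigD1 i) //= big1 => [|k /negbTE ki]; last first.
    by rewrite cof1 eq_sym ki mulr0.
  rewrite cof1 eqxx mulr1 addr0 PT /ei !(delta_mulE, mxE) eqxx /=.
  by rewrite mul1r.
move=> j l ji; rewrite PT /ei !(delta_mulE, mxE) (negbTE ji) /=.
by rewrite mulr0n mul0r mulr0 addr0.
Qed.

Lemma cofS : cofactor S i i = \det S * Si i i.
Proof.
rewrite /Si /invmx hS mxE /adjugate mxE mulrA divff ?mul1r //.
by rewrite -unitfE -unitmxE.
Qed.

Lemma det_A_raw (t : R) :
  \det ((M + t *: delta_mx a i)^T *m (M + t *: delta_mx a i))
  = \det S * (1 + t * w i 0)^+2 + t^+2 * rho * (\det S * Si i i).
Proof.
rewrite A_PSP.
rewrite (@det_row_change _ _ _ ((P t)^T *m S *m P t) i); last first.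
  by move=> j l ji; rewrite !mxE (negbTE ji) /= mulr0 addr0.
have eE : forall (Y : 'M[R]_p) c k, (Y + c *: delta_mx i i) i k = Y i k + c * (k == i)%:R.
  by move=> Y c k; rewrite !mxE eqxx.
under eq_bigr => k _ do rewrite eE mulrDl.
rewrite big_split /= -expand_det_row.
rewrite (bigD1 i) //= big1 => [|k /negbTE ki]; last first.
  by rewrite ki /= mulr0n mulr0 mul0r.
rewrite eqxx /= mulr1 addr0.
rewrite !det_mulmx det_tr detP.
rewrite (@cof_ii_indep _ _ _ S); last by move=> j l; exact: PSP_off.
rewrite cofS; ring.
Qed.

Lemma w_entry : w i 0 = (Si *m M^T) i a.
Proof. by rewrite /w /m mulmxA /ea -colE mxE. Qed.

Lemma mw_entry : (m^T *m w) 0 0 = (M *m Si *m M^T) a a.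
Proof.
rewrite /w /m trmx_mul trmxK /ea trmx_delta.
have dXd : forall X : 'M[R]_(n,n), ((delta_mx 0 a : 'rV[R]_n) *m X *m (delta_mx a 0 : 'cV[R]_n)) 0 0 = X a a.
  by move=> X; rewrite -colE -rowE !mxE.
by rewrite -dXd !mulmxA.
Qed.

End DetLine.

Section Sums.
Variable R : fieldType.
Variables (n p : nat) (M : 'M[R]_(n,p)).
Hypothesis hS : M^T *m M \in unitmx.
Let S := M^T *m M.
Let Si := invmx S.

Lemma Si_sym' : Si^T = Si.
Proof. by rewrite /Si trmx_inv /S trmx_mul trmxK. Qed.

Lemma sum_v2 : \sum_(a < n) \sum_(i < p) ((Si *m M^T) i a)^+2 = \tr Si.
Proof.
have e : (Si *m M^T) *m (Si *m M^T)^T = Si.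
  rewrite trmx_mul trmxK Si_sym' !mulmxA.
  by rewrite -(mulmxA Si) mulVmx // mul1mx.
rewrite exchange_big /=.
transitivity (\tr (Si *m M^T *m (Si *m M^T)^T)); last by rewrite e.
rewrite /mxtrace; apply: eq_bigr => i _.
rewrite [RHS]mxE; apply: eq_bigr => a _.
by rewrite expr2 [(_)^T _ _]mxE.
Qed.

Lemma sum_vM : \sum_(a < n) \sum_(i < p) (Si *m M^T) i a * M a i = p%:R.
Proof.
have e : (Si *m M^T) *m M = 1%:M by rewrite -mulmxA mulVmx.
rewrite exchange_big /= -(mxtrace1 R p) -e /mxtrace; apply: eq_bigr => i _.
by rewrite [RHS]mxE.
Qed.

Lemma sum_rho : \sum_(a < n) (1 - (M *m Si *m M^T) a a) = n%:R - p%:R.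
Proof.
rewrite sumrB sumr_const card_ord.
have : \tr (M *m Si *m M^T) = p%:R.
  by rewrite -mulmxA mxtrace_mulC -mulmxA mulVmx // mxtrace1.
by rewrite /mxtrace => ->.
Qed.

End Sums.

Section Pos.
Variable R : realType.

Lemma rv_sq_ge0 (q : nat) (v : 'rV[R]_q) : 0 <= (v *m v^T) 0 0.
Proof.
by rewrite mxE; apply: sumr_ge0 => k _; rewrite mxE -expr2 sqr_ge0.
Qed.

Lemma rv_sq_gt0 (q : nat) (v : 'rV[R]_q) : v != 0 -> 0 < (v *m v^T) 0 0.
Proof.
move=> vn0; rewrite lt_def rv_sq_ge0 andbT; apply: contraNN vn0 => /eqP h.
apply/eqP/matrixP => x k; rewrite !ord1 [RHS]mxE.
move: h; rewrite mxE => h.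
have pos : forall j : 'I_q, true -> 0 <= v 0 j * v^T j 0.
  by move=> j _; rewrite mxE -expr2 sqr_ge0.
have := @psumr_eq0P _ _ _ _ pos h k isT; rewrite !mxE -expr2 => /eqP.
by rewrite sqrf_eq0 => /eqP.
Qed.

Lemma gram_det_ne0 (n p : nat) (M : 'M[R]_(n,p)) (s : R) :
  \det (M^T *m M) != 0 -> 0 <= s <= 1 ->
  \det ((1 - s) *: (M^T *m M) + s *: 1%:M) != 0.
Proof.
move=> hM /andP[s0 s1].
have [->|sp] := eqVneq s 0.
  by rewrite subr0 scale1r scale0r addr0.
have sgt : 0 < s by rewrite lt_def sp s0.
apply/negP => /det0P[v vn0 vA].
have : (v *m ((1 - s) *: (M^T *m M) + s *: 1%:M) *m v^T) 0 0 = 0.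
  by rewrite vA mul0mx mxE.
have e : v *m (M^T *m M) *m v^T = (v *m M^T) *m (v *m M^T)^T.
  by rewrite trmx_mul trmxK !mulmxA.
rewrite mulmxDr mulmxDl -!scalemxAr -!scalemxAl mulmx1 e.
have ent : forall (c d : R) (A B : 'M[R]_1), (c *: A + d *: B) 0 0 = c * A 0 0 + d * B 0 0.
  by move=> c d A B; rewrite !mxE.
rewrite ent.
have h1 := @rv_sq_ge0 _ (v *m M^T).
have h2 := @rv_sq_gt0 _ v vn0.
move=> h.
have : 0 < (1 - s) * (v *m M^T *m (v *m M^T)^T) 0 0 + s * (v *m v^T) 0 0.
  have : 0 <= (1 - s) * (v *m M^T *m (v *m M^T)^T) 0 0.
    by apply: mulr_ge0 => //; rewrite subr_ge0.
  have : 0 < s * (v *m v^T) 0 0 by apply: mulr_gt0.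
  lra.
by rewrite h ltxx.
Qed.


Lemma gram_det_gt0 (n p : nat) (M : 'M[R]_(n,p)) :
  \det (M^T *m M) != 0 -> 0 < \det (M^T *m M).
Proof.
move=> hM.
pose Q : 'M[{poly R}]_p := \matrix_(j, k)
   (((M^T *m M) j k)%:P * (1 - 'X) + ((j == k)%:R)%:P * 'X).
pose f := fun s => (\det Q).[s].
have fE : forall s, f s = \det ((1 - s) *: (M^T *m M) + s *: 1%:M).
  move=> s; rewrite /f -horner_evalE -det_map_mx; congr (\det _).
  apply/matrixP => j k; rewrite !mxE /= horner_evalE !hornerE.
  by rewrite mulrC [s * _]mulrC.
have c : continuous f by move=> x; exact: continuous_horner.
have f1 : f 1 = 1 by rewrite fE subrr scale0r add0r scale1r det1.
have fne : forall s, 0 <= s <= 1 -> f s != 0.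
  by move=> s hs; rewrite fE; apply: gram_det_ne0.
have f0 : f 0 = \det (M^T *m M) by rewrite fE subr0 scale1r scale0r addr0.
rewrite -f0 lt_def fne ?lexx ?ler01 //=.
rewrite leNgt; apply/negP => f0neg.
have [c' cin fc] : exists2 c, c \in `[0, 1] & f c = 0.
  apply: IVT; first exact: ler01.
    exact: continuous_subspaceT.
  by rewrite f1 ge_min le_max ler01 orbT andbT (ltW f0neg).
move: cin; rewrite in_itv /= => cin.
by move: (fne c' cin); rewrite fc eqxx.
Qed.

Lemma frob2_gt0 (n p : nat) (M : 'M[R]_(n,p)) : (0 < p)%N ->
  \det (M^T *m M) != 0 -> 0 < \sum_(a < n) \sum_(i < p) M a i ^+ 2.
Proof.
move=> hp hM; rewrite lt_def; apply/andP; split; last first.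
  by apply: sumr_ge0 => a _; apply: sumr_ge0 => i _; exact: sqr_ge0.
apply/eqP => h0.
have M0 : M = 0.
  apply/matrixP => a i; rewrite mxE.
  have pa : forall a : 'I_n, true -> 0 <= \sum_(i < p) M a i ^+ 2.
    by move=> a' _; apply: sumr_ge0 => i' _; exact: sqr_ge0.
  have := @psumr_eq0P _ _ _ _ pa h0 a isT => h1.
  have pi : forall i : 'I_p, true -> 0 <= M a i ^+ 2 by move=> i' _; exact: sqr_ge0.
  have := @psumr_eq0P _ _ _ _ pi h1 i isT.
  by move/eqP; rewrite sqrf_eq0 => /eqP.
move: hM; rewrite M0 mulmx0.
by case: p hp M M0 h0 => // p' _ _ _ _; rewrite det0 eqxx.
Qed.

End Pos.


Section Final.
Variable R : realType.

Lemma calc_clean (alpha gamma d0 d1 d2 f0 f1 : R) (h : R -> R) :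
  0 < d0 -> 0 < f0 ->
  (forall t, h t = powR (d0 + d1*t + d2*t^+2) alpha
                   * powR (Num.sqrt (f0 + f1*t + t^+2)) (-gamma)) ->
  (\forall t \near 0, derivable h t 1) /\ derivable (derive1 h) 0 1 /\
  derive1 (derive1 h) 0 = h 0 * (alpha * (2*d2/d0 - (d1/d0)^+2)
     + (-gamma/2) * (2/f0 - (f1/f0)^+2)
     + (alpha*(d1/d0) + (-gamma/2)*(f1/f0))^+2).
Proof.
move=> hd0 hf0 hE.
have -> : h = (fun t => powR (d0 + d1*t + d2*t^+2) alpha
                   * powR (Num.sqrt (f0 + f1*t + t^+2)) (-gamma)).
  by apply/funext => t; exact: hE.
have [A [B C]] := @calc_main R alpha gamma d0 d1 d2 f0 f1 hd0 hf0.
split; first exact: A.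
split; first exact: B.
rewrite C; congr (_ * _) => /=.
rewrite !mulr0 expr0n /= !mulr0 !addr0.
have d0n : d0 != 0 by rewrite gt_eqF.
have f0n : f0 != 0 by rewrite gt_eqF.
by field; rewrite f0n d0n.
Qed.


Lemma sum_delta (n p : nat) (a : 'I_n) (i : 'I_p) (g : 'I_n -> 'I_p -> R) :
  \sum_(b < n) \sum_(j < p) ((b == a) && (j == i))%:R * g b j = g a i.
Proof.
rewrite (bigD1 a) //= [X in _ + X]big1 => [|b /negbTE ba]; last first.
  by apply: big1 => j _; rewrite ba /= mul0r.
rewrite addr0 (bigD1 i) //= [X in _ + X]big1 => [|j /negbTE ji]; last by rewrite ji andbF mul0r.
by rewrite !eqxx mul1r addr0.
Qed.

Lemma frob_line (n p : nat) (M : 'M[R]_(n,p)) (a : 'I_n) (i : 'I_p) (t : R) :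
  frob (M + t *: delta_mx a i)
  = Num.sqrt (\sum_(b < n) \sum_(j < p) M b j ^+ 2 + (2 * M a i) * t + t^+2).
Proof.
rewrite /frob; congr Num.sqrt.
transitivity (\sum_(b < n) \sum_(j < p) (M b j ^+ 2
      + ((b == a) && (j == i))%:R * (2 * M b j * t + t^+2))).
  apply: eq_bigr => b _; apply: eq_bigr => j _; rewrite !mxE.
  by case: ((b == a) && (j == i)) => /=; ring.
under eq_bigr => b _ do rewrite big_split /=.
rewrite big_split /= sum_delta; ring.
Qed.

End Final.

Theorem proposition2 (R : realType) (n p : nat) (gamma : R)
  (hp : (0 < p)%N) (hn : (0 < n)%N) (hnp : (p + 1 < n)%N) (hgamma : 0 <= gamma)
  (M : 'M[R]_(n, p)) (hM : \det (M^T *m M) != 0) :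
  (forall (a : 'I_n) (i : 'I_p),
     (\forall t \near 0, derivable (coord_line (pi_MSVS1 gamma) M a i) t 1)
     /\ derivable (derive1 (coord_line (pi_MSVS1 gamma) M a i)) 0 1)
  /\
  laplacian (pi_MSVS1 gamma) M
  = gamma * (gamma + (n * p)%:R - 2 * (p ^ 2)%:R - 2 * p%:R + 2)
    * (frob M) ^- 2 * pi_MSVS1 gamma M.
Proof.
have hSu : M^T *m M \in unitmx by rewrite unitmxE unitfE.
have dpos := @gram_det_gt0 R n p M hM.
have Fpos := @frob2_gt0 R n p M hp hM.
pose F0 := \sum_(a < n) \sum_(i < p) M a i ^+ 2.
pose alpha : R := - ((n%:R - p%:R - 1) / 2).
pose v := fun (a : 'I_n) (i : 'I_p) => ((invmx (M^T *m M) *m M^T) i a : R).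
pose s := fun (i : 'I_p) => (invmx (M^T *m M) i i : R).
pose r := fun (a : 'I_n) => (1 - (M *m invmx (M^T *m M) *m M^T) a a : R).
pose dS := \det (M^T *m M).
have key : forall a i t, coord_line (pi_MSVS1 gamma) M a i t
   = powR (dS + (dS * (2 * v a i)) * t + (dS * (v a i ^+ 2 + r a * s i)) * t ^+ 2) alpha
     * powR (Num.sqrt (F0 + (2 * M a i) * t + t ^+ 2)) (- gamma).
  move=> a i t; rewrite /coord_line /pi_MSVS1 frob_line (@det_A_raw R n p M a i hSu t).
  rewrite w_entry mw_entry; congr (powR _ _ * _).
  by rewrite /dS /v /r /s; ring.
have H := fun a i => @calc_clean R alpha gamma dS _ _ F0 _ _ dpos Fpos (key a i).
split.
  by move=> a i; have [A [B _]] := H a i; split.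
have dSn : dS != 0 by rewrite gt_eqF.
have F0n : F0 != 0 by rewrite gt_eqF.
pose beta : R := - gamma / 2.
pose c1 : R := 4 * alpha ^+ 2 - 2 * alpha.
pose c2 : R := 2 * alpha.
pose c3 : R := (4 * beta ^+ 2 - 4 * beta) / F0 ^+ 2.
pose c4 : R := 8 * alpha * beta / F0.
pose c5 : R := 2 * beta / F0.
pose k := fun (a : 'I_n) (i : 'I_p) => c1 * v a i ^+ 2 + c2 * (r a * s i)
   + c3 * M a i ^+ 2 + c4 * (v a i * M a i) + c5.
have H2 : forall a i, d2_partial (pi_MSVS1 gamma) M a i = pi_MSVS1 gamma M * k a i.
  move=> a i; rewrite /d2_partial; have [_ [_ ->]] := H a i.
  rewrite /coord_line scale0r addr0; congr (_ * _).
  rewrite /k /c1 /c2 /c3 /c4 /c5 /beta.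
  by field; rewrite F0n dSn.
have L : laplacian (pi_MSVS1 gamma) M
    = pi_MSVS1 gamma M * \sum_(a < n) \sum_(i < p) k a i.
  rewrite /laplacian mulr_sumr; apply: eq_bigr => a _.
  by rewrite mulr_sumr; apply: eq_bigr => i _; exact: H2.
pose T : R := \tr (invmx (M^T *m M)).
have SK : \sum_(a < n) \sum_(i < p) k a i
   = c1 * T + c2 * ((n%:R - p%:R) * T) + c3 * F0 + c4 * p%:R + c5 * (n%:R * p%:R).
  rewrite /k.
  under eq_bigr => a _ do rewrite !big_split /= -!mulr_sumr.
  rewrite !big_split /= -!mulr_sumr.
  have e1 := @sum_v2 R n p M hSu.
  have e2 := @sum_vM R n p M hSu.
  have e3 := @sum_rho R n p M hSu.
  rewrite /v in e1 e2 *.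
  rewrite e1 -/T.
  have -> : \sum_(a < n) \sum_(i < p) (invmx (M^T *m M) *m M^T) i a * M a i = p%:R.
    exact: e2.
  have -> : \sum_(a < n) r a * \sum_(i < p) s i = (n%:R - p%:R) * T.
    rewrite -mulr_suml; congr (_ * _); first exact: e3.
  have -> : \sum_(a < n) \sum_(i < p) F0^-1 = F0^-1 * (n%:R * p%:R).
    rewrite sumr_const card_ord sumr_const card_ord.
    by rewrite -mulrnA -[LHS]mulr_natr natrM; ring.
  rewrite /c5 -/F0; ring.
rewrite L SK.
have fr : frob M ^- 2 = F0^-1.
  by rewrite /frob sqr_sqrtr // ltW.
rewrite fr natrM natrX /c1 /c2 /c3 /c4 /c5 /beta /alpha.
by field.
Qed.
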